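(* Let $f:\mathbb{R}^n\to\mathbb{R}$ be a polynomial of degree at most $4$ that can be written as \[ f(x)=g(x)^T G\, g(x)+c^T h(x), \] where $g:\mathbb{R}^n\to\mathbb{R}^p$ and $h:\mathbb{R}^n\to\mathbb{R}^r$ are vector-valued polynomials each of whose components is a linear or quadratic polynomial, $G\in\mathbb{R}^{p\times p}$ is positive definite, and $c\in\mathbb{R}^r$. Let $\lambda$ be the minimum eigenvalue of $G$. Assume: (i) there exist $L_1,R>0$ such that $\|h(x)\|/\|g(x)\|\le R$ whenever $\|x\|>L_1$; (ii)(a) if $f(0)\neq0$, $L>L_1$ is such that $\|g(x)\|>\max\{|f(0)|,(1+\|c\|R)/\lambda\}$ whenever $\|x\|>L$; (ii)(b) if $f(0)=0$, $L>L_1$ is such that $\|g(x)\|>\|c\|R/\lambda$ whenever $\|x\|>L$. Then every global minimizer $x^*$ of $f$ satisfies $\|x^*\|\le L$, i.e., $\operatorname{argmin} f\subset B[0,L]=\{x:\|x\|\le L\}$.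
   Context: $\|\cdot\|$ denotes the Euclidean norm. *)

(* Defs.v *)
From mathcomp Require Import all_boot all_order all_algebra.
From mathcomp Require Import reals.
From mathcomp Require Import mpoly.
Set Implicit Arguments. Unset Strict Implicit. Unset Printing Implicit Defensive.
Import Order.TTheory GRing.Theory Num.Theory.
Local Open Scope ring_scope.

Definition enorm (R : realType) (n : nat) (x : 'rV[R]_n) : R :=
  Num.sqrt (\sum_(i < n) x 0 i ^+ 2).

Definition peval (R : realType) (n : nat) (q : {mpoly R[n]}) (x : 'rV[R]_n) : R :=
  q.@[fun i => x 0 i].

Definition pveval (R : realType) (n p : nat) (g : 'I_p -> {mpoly R[n]})
  (x : 'rV[R]_n) : 'rV[R]_p := \row_(i < p) peval (g i) x.

(* total degree of q is at most d  (msize q = 1 + total degree, 0 for q = 0) *)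
Definition deg_le (R : realType) (n : nat) (q : {mpoly R[n]}) (d : nat) : Prop :=
  (msize q <= d.+1)%N.

Definition posdef (R : realType) (p : nat) (G : 'M[R]_p) : Prop :=
  G^T = G /\ forall u : 'rV[R]_p, u != 0 -> 0 < (u *m G *m u^T) 0 0.

Definition min_eigenvalue (R : realType) (p : nat) (G : 'M[R]_p) (lam : R) : Prop :=
  eigenvalue G lam /\ forall mu : R, eigenvalue G mu -> lam <= mu.

Definition qform (R : realType) (p : nat) (G : 'M[R]_p) (v : 'rV[R]_p) : R :=
  (v *m G *m v^T) 0 0.

Definition dotv (R : realType) (r : nat) (c v : 'rV[R]_r) : R :=
  \sum_(i < r) c 0 i * v 0 i.

(* Main.v *)
Require Import Defs.
From mathcomp Require Import all_boot all_order all_algebra.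
From mathcomp Require Import reals.
From mathcomp Require Import mpoly.
From mathcomp Require Import classical_sets boolp topology normedtype derive matrix_normedtype.
Import Order.TTheory GRing.Theory Num.Theory numFieldNormedType.Exports.
Set Implicit Arguments. Unset Strict Implicit. Unset Printing Implicit Defensive.
Local Open Scope ring_scope.

Lemma cont_sum (R : realType) (T : topologicalType) (I : Type) (s : seq I)
  (F : I -> T -> R) : (forall i, continuous (F i)) ->
  continuous (fun x => \sum_(i <- s) F i x).
Proof.
move=> hF; elim: s => [|a s IH] /=.
  under eq_fun do rewrite big_nil. exact: cst_continuous.
under eq_fun do rewrite big_cons.
move=> x; apply: (@continuousD _ R^o); [exact: hF | exact: IH].
Qed.

Definition sq (R : realType) p (u : 'rV[R]_p) := (u *m u^T) 0 0.

Lemma sqE (R : realType) p (u : 'rV[R]_p) : sq u = \sum_i u 0 i ^+ 2.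
Proof. by rewrite /sq !mxE; apply: eq_bigr => j _; rewrite !mxE expr2. Qed.

Lemma qformE (R : realType) p (M : 'M[R]_p) (u : 'rV[R]_p) :
  qform M u = \sum_j (\sum_i u 0 i * M i j) * u 0 j.
Proof.
rewrite /qform !mxE; apply: eq_bigr => j _; rewrite !mxE; congr (_ * _).
Qed.

Lemma cont_qform (R : realType) p (M : 'M[R]_p) : continuous (qform M).
Proof.
have -> : qform M = fun u => \sum_j (\sum_i u 0 i * M i j) * u 0 j.
  by apply: funext => u; rewrite qformE.
apply: cont_sum => j x.
apply: (@continuousM R _ (fun u : 'rV[R]_p => \sum_i u 0 i * M i j) (fun u => u 0 j)); last exact: coord_continuous.
move: x; apply: cont_sum => i y.
apply: (@continuousM R _ (fun u : 'rV[R]_p => u 0 i) (fun _ => M i j)); first exact: coord_continuous.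
exact: cst_continuous.
Qed.

Lemma cont_sq (R : realType) p : continuous (@sq R p).
Proof.
have <- : qform 1%:M = @sq R p.
  by apply: funext => u; rewrite /qform /sq mulmx1.
exact: cont_qform.
Qed.

From mathcomp Require Import ring lra.

Lemma qform_scale (R : realType) p (A : 'M[R]_p) (k : R) (u : 'rV[R]_p) :
  qform A (k *: u) = k ^+ 2 * qform A u.
Proof.
by rewrite /qform linearZ /= -scalemxAl -scalemxAr -scalemxAl scalerA [LHS]mxE expr2.
Qed.

Lemma sq_scale (R : realType) p (k : R) (u : 'rV[R]_p) :
  sq (k *: u) = k ^+ 2 * sq u.
Proof.
by rewrite /sq linearZ /= -scalemxAl -scalemxAr scalerA [LHS]mxE expr2.
Qed.

Lemma sq_ge0 (R : realType) p (u : 'rV[R]_p) : 0 <= sq u.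
Proof. by rewrite sqE; apply: sumr_ge0 => i _; exact: sqr_ge0. Qed.

Lemma sq_eq0 (R : realType) p (u : 'rV[R]_p) : sq u = 0 -> u = 0.
Proof.
rewrite sqE => /eqP; rewrite psumr_eq0 => [/allP H|i _]; last exact: sqr_ge0.
apply/rowP => i; rewrite !mxE.
have := H i; rewrite mem_index_enum => /(_ isT) /=.
by rewrite sqrf_eq0 => /eqP.
Qed.

Lemma qform_bilin (R : realType) p (A : 'M[R]_p) (c w : 'rV[R]_p) (t : R) :
  A^T = A ->
  qform A (c + t *: w) = qform A c + 2 * t * (c *m A *m w^T) 0 0 + t ^+ 2 * qform A w.
Proof.
move=> sA.
have tr : (w *m A *m c^T) 0 0 = (c *m A *m w^T) 0 0.
  transitivity (((w *m A *m c^T)^T) 0 0); first by rewrite [RHS]mxE.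
  by rewrite !trmx_mul trmxK sA mulmxA.
have eD (X Y : 'M[R]_1) : (X + Y) 0 0 = X 0 0 + Y 0 0 by rewrite mxE.
have eZ k (X : 'M[R]_1) : (k *: X) 0 0 = k * X 0 0 by rewrite mxE.
rewrite /qform linearD /= linearZ /= !mulmxDl !mulmxDr.
rewrite -!scalemxAl -!scalemxAr !eD !eZ tr; lra.
Qed.

Lemma psd_kernel (R : realType) p (A : 'M[R]_p) (c : 'rV[R]_p) :
  A^T = A -> (forall v, 0 <= qform A v) -> qform A c = 0 -> c *m A = 0.
Proof.
move=> sA psd c0; apply/rowP => j; rewrite [RHS]mxE.
set w : 'rV[R]_p := delta_mx 0 j.
have bE : (c *m A *m w^T) 0 0 = (c *m A) 0 j.
  by rewrite /w trmx_delta -colE mxE.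
rewrite -bE; set b := (c *m A *m w^T) 0 0; set a := qform A w.
have a0 : 0 <= a by exact: psd.
set t := - b / (a + 1).
have htd : t * (a + 1) = - b by rewrite /t mulfVK // lt0r_neq0 // ltr_wpDl.
have := psd (c + t *: w); rewrite qform_bilin // c0 add0r => h.
have h2 : b ^+ 2 * (a + 2) <= 0.
  have : 0 <= (a + 1) ^+ 2 * (2 * t * b + t ^+ 2 * a) by apply: mulr_ge0 => //; exact: sqr_ge0.
  have -> : (a + 1) ^+ 2 * (2 * t * b + t ^+ 2 * a) = 2 * (t * (a+1)) * (a + 1) * b + (t * (a + 1)) ^+ 2 * a by ring.
  rewrite htd; nra.
nra.
Qed.

Lemma rayleigh (R : realType) p (M : 'M[R]_p) : M^T = M ->
  (exists v : 'rV[R]_p, v != 0) ->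
  exists m, eigenvalue M m /\ forall v, m * sq v <= qform M v.
Proof.
move=> sM [v0 v0n0].
pose S := [set u : 'rV[R]_p | sq u = 1]%classic.
have sv0 : 0 < sq v0.
  by rewrite lt0r sq_ge0 andbT; apply/eqP => /sq_eq0 /eqP; rewrite (negbTE v0n0).
have S0 : (S !=set0)%classic.
  exists ((Num.sqrt (sq v0))^-1 *: v0); rewrite /S /= sq_scale exprVn sqr_sqrtr ?sq_ge0 //.
  by rewrite mulVf // gt_eqF.
have Scl : closed S.
  have := (proj1 (continuous_closedP (@sq R p)) (@cont_sq R p) _ (@closed_eq _ 1)).
  by [].
have Scp : compact S.
  apply: (subclosed_compact Scl (@rV_compact _ _ (fun=> `[(-1 : R), 1]%classic) (fun=> @segment_compact _ _ _))).
  move=> u /= Su i; rewrite /= in_itv /=.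
  have : u ord0 i ^+ 2 <= 1.
    rewrite -Su sqE (bigD1 i) //= lerDl; apply: sumr_ge0 => k _; exact: sqr_ge0.
  move=> h; apply/andP; split; nra.
have [c cS cmin] := EVT_min_rV S0 Scp (continuous_subspaceT (@cont_qform R p M)).
rewrite inE /S /= in cS.
have cmin' u : sq u = 1 -> qform M c <= qform M u.
  by move=> Su; apply: cmin; rewrite inE.
set m := qform M c.
have bound v : m * sq v <= qform M v.
  have [->|vn0] := eqVneq v 0.
    by rewrite /sq /qform !mul0mx !mxE mulr0.
  have sv : 0 < sq v.
    by rewrite lt0r sq_ge0 andbT; apply/eqP => /sq_eq0 /eqP; rewrite (negbTE vn0).
  set s := Num.sqrt (sq v).
  have s2 : s ^+ 2 = sq v by rewrite /s sqr_sqrtr // sq_ge0.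
  have s0 : 0 < s by rewrite /s sqrtr_gt0.
  have := cmin' (s^-1 *: v); rewrite sq_scale qform_scale exprVn s2 mulVf ?gt_eqF // => /(_ erefl).
  rewrite -s2 => h.
  have -> : qform M v = s ^+ 2 * (s ^+ 2)^-1 * qform M v by rewrite mulfV ?mul1r // expf_neq0 // gt_eqF.
  have := sqr_ge0 s; rewrite /m in h *; nra.
pose A := M - m%:M.
have qA v : qform A v = qform M v - m * sq v.
  rewrite /qform /A mulmxBr mul_mx_scalar mulmxBl -scalemxAl !mxE.
  by rewrite /sq [in RHS]mxE.
have sA : A^T = A by rewrite /A linearB /= tr_scalar_mx sM.
have cA : c *m A = 0.
  apply: psd_kernel => // [v|]; rewrite qA; last by rewrite cS mulr1 subrr.
  by rewrite subr_ge0.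
exists m; split => //.
apply/eigenvalueP; exists c.
  by move/eqP: cA; rewrite /A mulmxBr mul_mx_scalar subr_eq0 => /eqP.
by apply/eqP => c0; move: cS; rewrite c0 /sq mul0mx mxE => /eqP; rewrite eq_sym oner_eq0.
Qed.

Lemma enorm_sq (R : realType) r (u : 'rV[R]_r) : enorm u ^+ 2 = sq u.
Proof. by rewrite /enorm sqr_sqrtr -sqE // sq_ge0. Qed.

Lemma enorm_ge0 (R : realType) r (u : 'rV[R]_r) : 0 <= enorm u.
Proof. exact: sqrtr_ge0. Qed.

Lemma cs_low (R : realType) r (c h : 'rV[R]_r) : - dotv c h <= enorm c * enorm h.
Proof.
set b := dotv c h.
have bE : b = (c *m 1%:M *m h^T) 0 0.
  by rewrite mulmx1 /b /dotv mxE; apply: eq_bigr => i _; rewrite mxE.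
have q1 v : qform 1%:M v = sq v by rewrite /qform /sq mulmx1.
have b2 : b ^+ 2 <= sq c * sq h.
  have [h0|hn0] := eqVneq (sq h) 0.
    have -> : b = 0.
      by rewrite /b /dotv (sq_eq0 h0) big1 // => i _; rewrite mxE mulr0.
    by rewrite expr0n /= h0 mulr0.
  have ha : 0 < sq h by rewrite lt0r hn0 sq_ge0.
  set t := - b / sq h.
  have ht : t * sq h = - b by rewrite /t mulfVK.
  have := sq_ge0 (c + t *: h); rewrite -q1 qform_bilin ?trmx1 // !q1 -bE => H.
  have : 0 <= sq h * (sq c + 2 * t * b + t ^+ 2 * sq h) by apply: mulr_ge0 => //; exact: ltW.
  have -> : sq h * (sq c + 2 * t * b + t ^+ 2 * sq h) = sq h * sq c + 2 * (t * sq h) * b + (t * sq h) ^+ 2 by ring.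
  rewrite ht; nra.
have E0 : 0 <= enorm c * enorm h by apply: mulr_ge0; exact: enorm_ge0.
have E2 : (enorm c * enorm h) ^+ 2 = sq c * sq h by rewrite exprMn !enorm_sq.
move: E0 E2 b2; set E := enorm c * enorm h => E0 E2 b2.
nra.
Qed.

Unset Implicit Arguments.

Theorem theorem3 (R : realType) (n p r : nat) (f : {mpoly R[n]})
  (g : 'I_p -> {mpoly R[n]}) (h : 'I_r -> {mpoly R[n]})
  (G : 'M[R]_p) (c : 'rV[R]_r) (lam L1 Rb L : R) :
  deg_le f 4 ->
  (forall i, deg_le (g i) 2) ->
  (forall i, deg_le (h i) 2) ->
  posdef G ->
  (forall x, peval f x = qform G (pveval g x) + dotv c (pveval h x)) ->
  min_eigenvalue G lam ->
  (* (i) *)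
  0 < L1 -> 0 < Rb ->
  (forall x, L1 < enorm x -> enorm (pveval h x) / enorm (pveval g x) <= Rb) ->
  (* (ii) *)
  L1 < L ->
  (peval f 0 != 0 -> forall x, L < enorm x ->
     Num.max `|peval f 0| ((1 + enorm c * Rb) / lam) < enorm (pveval g x)) ->
  (peval f 0 = 0 -> forall x, L < enorm x ->
     enorm c * Rb / lam < enorm (pveval g x)) ->
  forall xs : 'rV[R]_n, (forall y, peval f xs <= peval f y) -> enorm xs <= L.
Proof.
move=> _ _ _ [sG pG] fE [eigl minl] L10 Rb0 hR L1L ha hb xs xmin.
rewrite leNgt; apply/negP => Lx.
have [v vG vn0] := eigenvalueP eigl.
have [m [eigm bnd]] := rayleigh sG (ex_intro _ v vn0).
have lm : lam <= m := minl m eigm.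
have lam0 : 0 < lam.
  have := pG v vn0; rewrite /qform vG -scalemxAl mxE -/(sq v) => h1.
  have sv : 0 < sq v.
    by rewrite lt0r sq_ge0 andbT; apply/eqP => /sq_eq0 /eqP; rewrite (negbTE vn0).
  by move: h1; rewrite pmulr_lgt0.
have qlow u : lam * enorm u ^+ 2 <= qform G u.
  rewrite enorm_sq; apply: le_trans (bnd u); apply: ler_wpM2r => //; exact: sq_ge0.
have hfx := fE xs; have f0 := xmin 0.
have cs := cs_low c (pveval h xs).
have ql := qlow (pveval g xs).
have hH := hR xs (lt_trans L1L Lx).
have C0 := enorm_ge0 c.
move: hfx f0 cs ql hH C0.
set N := enorm (pveval g xs); set H := enorm (pveval h xs); set C := enorm c.
set q := qform G _; set d := dotv _ _; set fx := peval f xs; set f00 := peval f 0.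
move=> hfx f0 cs ql hH C0.
have N0 : 0 <= N := enorm_ge0 _.
have [fz|fnz] := eqVneq f00 0.
  have := hb fz xs Lx; rewrite -/N ltr_pdivrMr // => hN.
  have Np : 0 < N.
    rewrite lt0r N0 andbT; apply/eqP => N00; move: hN; rewrite N00 mul0r.
    by rewrite ltNge; apply/negP/negPn; apply: mulr_ge0 => //; exact: ltW.
  move: hH; rewrite ler_pdivrMr // => hH.
  have p1 : C * H <= C * (Rb * N) by apply: ler_wpM2l.
  have p2 : 0 < N * (N * lam - C * Rb) by apply: mulr_gt0 => //; rewrite subr_gt0.
  clear -hfx f0 cs ql p1 p2 hH C0 Np fz; nra.
have := ha fnz xs Lx; rewrite -/N gt_max ltr_pdivrMr // => /andP[hf hN].
have Np : 0 < N by apply: le_lt_trans hf.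
move: hH; rewrite ler_pdivrMr // => hH.
have p1 : C * H <= C * (Rb * N) by apply: ler_wpM2l.
have p2 : 0 < N * (N * lam - (1 + C * Rb)) by apply: mulr_gt0 => //; rewrite subr_gt0.
have fa := ler_norm f00.
clear -hfx f0 cs ql p1 p2 hH C0 Np fa hf; nra.
Qed.
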